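(* Let $p$ be an odd prime. The functor $U$ from $\mathbb{Z}_{(p)}$-modules to discrete $A$-modules, $UL=\mathrm{Hom}^{\mathrm{cts}}_{\mathbb{Z}_{(p)}}(A,L)$, is exact and preserves direct sums and direct limits.
   Context: $A$ is the ring of degree zero stable operations in $p$-local complex $K$-theory. Fix $q$ primitive mod $p^2$, $\Psi^q\in A$ the Adams operation, $q_i=q^{(-1)^i\lfloor i/2\rfloor}$, $\Theta_n(X)=\prod_{i=1}^n(X-q_i)$, $\Phi_n=\Theta_n(\Psi^q)$; every element of $A$ is uniquely a convergent sum $\sum_{n\ge0}a_n\Phi_n$ with $a_n\in\mathbb{Z}_{(p)}$, and $A_m=\{\sum_{n\ge m}a_n\Phi_n\}$. An $A$-module $M$ is discrete if each $x\in M$ satisfies $A_nx=0$ for some $n$. $\mathrm{Hom}^{\mathrm{cts}}_{\mathbb{Z}_{(p)}}(A,L)$ is the set of $\mathbb{Z}_{(p)}$-homomorphisms $A\to L$ whose kernel contains some $A_n$, an $A$-module via $(af)(t)=f(ta)$. *)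

(* Defs.v *)
From HB Require Import structures.
From mathcomp Require Import all_boot all_order all_algebra ring.
Set Implicit Arguments. Unset Strict Implicit. Unset Printing Implicit Defensive.
Import Order.TTheory GRing.Theory Num.Theory.
Local Open Scope ring_scope.

(* The p-local integers Z_(p) = { x in Q | p does not divide denq x }  *)
(* (for p prime, "coprime p den" is the same as "p does not divide").  *)

Definition zloc_pred (p : nat) : {pred rat} := fun x => coprime p `|denq x|.

Lemma denq_dvd_int (x : rat) (d : int) :
  (x * d%:~R) \is a Num.int -> (denq x %| d)%Z.
Proof.
move=> /intrP [k Hk].
have E : (numq x * d)%:~R = (k * denq x)%:~R :> rat.
  by rewrite !intrM numqE -Hk mulrAC.
have E' : numq x * d = k * denq x by apply: (@intr_inj rat).
have : (denq x %| numq x * d)%Z by rewrite E' dvdz_mull.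
rewrite Gauss_dvdzr // coprimez_sym; exact: coprime_num_den.
Qed.

Lemma zloc_den_mul p (x : rat) (d : int) :
  (x * d%:~R) \is a Num.int -> coprime p `|d| -> coprime p `|denq x|.
Proof.
move=> Hx Hd; have := denq_dvd_int Hx => Hdv.
exact: (coprimez_dvdr (p := p%:Z) Hdv).
Qed.

Fact zloc_closed p : GRing.subring_closed (zloc_pred p).
Proof.
split.
- by rewrite /zloc_pred unfold_in /= coprimen1.
- move=> x y; rewrite /zloc_pred !unfold_in /= => Hx Hy.
  apply: (@zloc_den_mul p _ (denq x * denq y)).
    have -> : (x - y) * (denq x * denq y)%:~R
        = (numq x * denq y - numq y * denq x)%:~R :> rat.
      rewrite intrB !intrM !numqE; ring.
    exact: intr_int.
  by rewrite abszM coprimeMr Hx Hy.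
- move=> x y; rewrite /zloc_pred !unfold_in /= => Hx Hy.
  apply: (@zloc_den_mul p _ (denq x * denq y)).
    have -> : (x * y) * (denq x * denq y)%:~R = (numq x * numq y)%:~R :> rat.
      rewrite !intrM !numqE; ring.
    exact: intr_int.
  by rewrite abszM coprimeMr Hx Hy.
Qed.

HB.instance Definition _ p := GRing.isSubringClosed.Build rat (zloc_pred p)
  (zloc_closed p).

Record Zloc (p : nat) := ZlocMk { zval : rat; _ : zval \in zloc_pred p }.
HB.instance Definition _ p := [isSub for @zval p].
HB.instance Definition _ p := [Choice of Zloc p by <:].
HB.instance Definition _ p := [SubChoice_isSubComNzRing of Zloc p by <:].

(* The ring A of degree zero stable operations, as a Z_(p)-module.     *)
(* Every element of A is uniquely a convergent sum  sum_n a_n Phi_n    *)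
(* with a_n in Z_(p); we represent the element by its coefficient      *)
(* and A_m = { sum_{n >= m} a_n Phi_n } = sequences vanishing below m. *)

Definition Acoef (p : nat) := nat -> Zloc p.

Definition Aadd p (a b : Acoef p) : Acoef p := fun n => a n + b n.
Definition Ascale p (c : Zloc p) (a : Acoef p) : Acoef p := fun n => c * a n.

Definition in_Afilt p (m : nat) (a : Acoef p) : Prop :=
  forall n, (n < m)%N -> a n = 0.

(* h : A -> L is an element of Hom^cts_{Z_(p)}(A, L) = U L :           *)
(* a Z_(p)-linear map whose kernel contains some A_m.                  *)
Definition is_cts_hom p (L : lmodType (Zloc p)) (h : Acoef p -> L) : Prop :=
  [/\ forall a b, h (Aadd a b) = h a + h b,
      forall c a, h (Ascale c a) = c *: h a
    & exists m, forall a, in_Afilt m a -> h a = 0].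

(* On morphisms, U g sends h to g \o h. *)

Definition is_direct_sum p (I : Type) (M : I -> lmodType (Zloc p))
    (S : lmodType (Zloc p)) (iota : forall i, {linear M i -> S}) : Prop :=
  (forall s : S, exists n (e : 'I_n -> I) (x : forall k, M (e k)),
       s = \sum_(k < n) iota (e k) (x k)) /\
  (forall n (e : 'I_n -> I) (x : forall k, M (e k)), injective e ->
       \sum_(k < n) iota (e k) (x k) = 0 -> forall k, x k = 0).

Definition U_is_direct_sum p (I : Type) (M : I -> lmodType (Zloc p))
    (S : lmodType (Zloc p)) (iota : forall i, {linear M i -> S}) : Prop :=
  (forall h : Acoef p -> S, is_cts_hom h ->
     exists n (e : 'I_n -> I) (hs : forall k, Acoef p -> M (e k)),
       (forall k, is_cts_hom (hs k)) /\
       forall a, h a = \sum_(k < n) iota (e k) (hs k a)) /\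
  (forall n (e : 'I_n -> I) (hs : forall k, Acoef p -> M (e k)), injective e ->
       (forall k, is_cts_hom (hs k)) ->
       (forall a, \sum_(k < n) iota (e k) (hs k a) = 0) ->
       forall k a, hs k a = 0).

Definition directed (I : Type) (le : I -> I -> Prop) : Prop :=
  [/\ forall i, le i i,
      forall i j k, le i j -> le j k -> le i k,
      inhabited I
    & forall i j, exists k, le i k /\ le j k].

Definition direct_system p (I : Type) (le : I -> I -> Prop)
    (L : I -> lmodType (Zloc p)) (phi : forall i j, {linear L i -> L j}) : Prop :=
  [/\ directed le,
      forall i (x : L i), phi i i x = x
    & forall i j k (x : L i), le i j -> le j k -> phi j k (phi i j x) = phi i k x].

Definition is_direct_limit p (I : Type) (le : I -> I -> Prop)
    (L : I -> lmodType (Zloc p)) (phi : forall i j, {linear L i -> L j})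
    (C : lmodType (Zloc p)) (psi : forall i, {linear L i -> C}) : Prop :=
  [/\ forall i j (x : L i), le i j -> psi j (phi i j x) = psi i x,
      forall c : C, exists i (x : L i), psi i x = c
    & forall i (x : L i), psi i x = 0 -> exists j, le i j /\ phi i j x = 0].

Definition U_is_direct_limit p (I : Type) (le : I -> I -> Prop)
    (L : I -> lmodType (Zloc p)) (phi : forall i j, {linear L i -> L j})
    (C : lmodType (Zloc p)) (psi : forall i, {linear L i -> C}) : Prop :=
  [/\ forall i j (h : Acoef p -> L i), le i j -> forall a, psi j (phi i j (h a)) = psi i (h a),
      forall h : Acoef p -> C, is_cts_hom h ->
        exists i (h' : Acoef p -> L i), is_cts_hom h' /\ forall a, psi i (h' a) = h a
    & forall i (h' : Acoef p -> L i), is_cts_hom h' ->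
        (forall a, psi i (h' a) = 0) ->
        exists j, le i j /\ forall a, phi i j (h' a) = 0].

(* Main.v *)
Require Import Defs.
From HB Require Import structures.
From mathcomp Require Import all_boot all_order all_algebra.
From Stdlib Require Import FunctionalExtensionality.
Import Order.TTheory GRing.Theory Num.Theory.
Local Open Scope ring_scope.

Section Cts.
Variable p : nat.

Definition unitv (n : nat) : Acoef p := fun k => if k == n then 1 else 0.

Lemma cts_zero (L : lmodType (Zloc p)) : is_cts_hom (fun _ : Acoef p => (0 : L)).
Proof. split => //; first by move=> *; rewrite addr0. by move=> *; rewrite scaler0.
exists 0%N => //. Qed.

Lemma cts_add (L : lmodType (Zloc p)) (h1 h2 : Acoef p -> L) :
  is_cts_hom h1 -> is_cts_hom h2 -> is_cts_hom (fun a => h1 a + h2 a).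
Proof.
move=> [A1 S1 [m1 Z1]] [A2 S2 [m2 Z2]]; split.
- by move=> a b; rewrite A1 A2 addrACA.
- by move=> c a; rewrite S1 S2 scalerDr.
- exists (maxn m1 m2) => a Ha; rewrite Z1 ?Z2 ?addr0 // => n Hn; apply: Ha.
  + by rewrite leq_max Hn orbT.
  + by rewrite leq_max Hn.
Qed.

Lemma cts_coord (L : lmodType (Zloc p)) n (x : L) : is_cts_hom (fun a : Acoef p => a n *: x).
Proof.
split.
- by move=> a b; rewrite /Aadd scalerDl.
- by move=> c a; rewrite /Ascale scalerA.
- exists n.+1 => a Ha; by rewrite Ha // scale0r.
Qed.

Lemma cts_comp (L L' : lmodType (Zloc p)) (f : {linear L -> L'}) (h : Acoef p -> L) :
  is_cts_hom h -> is_cts_hom (fun a => f (h a)).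
Proof.
move=> [A1 S1 [m1 Z1]]; split.
- by move=> a b; rewrite A1 linearD.
- by move=> c a; rewrite S1 linearZ.
- by exists m1 => a Ha; rewrite Z1 // linear0.
Qed.

Lemma cts_expand (L : lmodType (Zloc p)) (h : Acoef p -> L) : is_cts_hom h ->
  exists m, forall a, h a = \sum_(n < m) a n *: h (unitv n).
Proof.
move=> [A1 S1 [m Z1]]; exists m => a.
have h0 : h (fun _ => 0) = 0.
  have -> : (fun _ : nat => (0 : Zloc p)) = Ascale 0 (fun _ => 0).
    by apply: functional_extensionality => k; rewrite /Ascale mul0r.
  by rewrite S1 scale0r.
pose tr k := fun i => if (i < k)%N then a i else 0.
have E : a = Aadd (tr m) (fun i => if (i < m)%N then 0 else a i).
  by apply: functional_extensionality => i; rewrite /Aadd /tr; case: ifP; rewrite ?addr0 ?add0r.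
rewrite {1}E A1 (Z1 (fun i => if (i < m)%N then 0 else a i)); last by move=> i Hi; rewrite Hi.
rewrite addr0.
elim: m {Z1 E} => [|m IH].
  rewrite big_ord0 -h0; congr h; apply: functional_extensionality => i //.
rewrite big_ord_recr /= -IH.
have -> : tr m.+1 = Aadd (tr m) (Ascale (a m) (unitv m)).
  apply: functional_extensionality => i; rewrite /Aadd /Ascale /tr /unitv.
  case: (ltngtP i m) => H.
  - by rewrite ltnS (ltnW H) mulr0 addr0.
  - by rewrite ltnNge H /= mulr0 addr0.
  - by rewrite H ltnSn mulr1 add0r.
by rewrite A1 S1.
Qed.

End Cts.
Arguments cts_zero {p L}.
Arguments cts_add {p L h1 h2}.
Arguments cts_coord {p L} n x.
Arguments cts_comp {p L L'} f {h}.
Arguments cts_expand {p L h}.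

Lemma ord0_false (k : 'I_0) : False. Proof. by case: k. Qed.

Section Parts.
Variable p : nat.

Lemma exact_part (L1 L2 L3 : lmodType (Zloc p))
  (f : {linear L1 -> L2}) (g : {linear L2 -> L3}) :
  (forall y : L2, g y = 0 <-> exists x : L1, f x = y) ->
  forall h : Acoef p -> L2, is_cts_hom h ->
    ((forall a, g (h a) = 0) <->
     exists h1 : Acoef p -> L1, is_cts_hom h1 /\ forall a, f (h1 a) = h a).
Proof.
move=> Hex h Hh; split.
- move=> Hg; have [m Em] := cts_expand Hh.
  suff: forall k, exists h1 : Acoef p -> L1, is_cts_hom h1 /\
      forall a, f (h1 a) = \sum_(n < k) a n *: h (unitv p n).
    move/(_ m) => [h1 [c1 e1]]; exists h1; split=> // a; by rewrite e1 Em.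
  elim=> [|k [h1 [c1 e1]]].
    exists (fun _ => 0); split; first exact: cts_zero.
    by move=> a; rewrite linear0 big_ord0.
  have [x fx] := (Hex (h (unitv p k))).1 (Hg _).
  exists (fun a => h1 a + a k *: x); split; first exact: cts_add c1 (cts_coord _ _).
  by move=> a; rewrite linearD linearZ fx e1 big_ord_recr.
- move=> [h1 [_ e1]] a; rewrite -e1; apply/(Hex _).2; by exists (h1 a).
Qed.

Section DS.
Variables (I : Type) (M : I -> lmodType (Zloc p)) (S : lmodType (Zloc p))
          (iota : forall i, {linear M i -> S}).

Definition Rep (h : Acoef p -> S) :=
  exists n (e : 'I_n -> I) (hs : forall k, Acoef p -> M (e k)),
    (forall k, is_cts_hom (hs k)) /\
    forall a, h a = \sum_(k < n) iota (e k) (hs k a).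

Lemma rep_zero : Rep (fun _ => 0).
Proof.
exists 0%N, (fun k => False_rect I (ord0_false k)),
  (fun k => False_rect _ (ord0_false k)).
split; first by move=> k; case: (ord0_false k).
by move=> a; rewrite big_ord0.
Qed.

Lemma rep_add h1 h2 : Rep h1 -> Rep h2 -> Rep (fun a => h1 a + h2 a).
Proof.
move=> [n1 [e1 [hs1 [c1 E1]]]] [n2 [e2 [hs2 [c2 E2]]]].
pose e (k : 'I_(n1 + n2)) : I := match split k with inl j => e1 j | inr j => e2 j end.
pose hs (k : 'I_(n1 + n2)) : Acoef p -> M (e k) :=
  match split k as s return Acoef p -> M (match s with inl j => e1 j | inr j => e2 j end)
  with inl j => hs1 j | inr j => hs2 j end.
have Ek : forall a k, iota (e k) (hs k a) =
   match split k with inl j => iota (e1 j) (hs1 j a) | inr j => iota (e2 j) (hs2 j a) end.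
  by move=> a k; rewrite /hs /e; case: (split k).
exists (n1 + n2)%N, e, hs; split.
  by move=> k; rewrite /hs /e; case: (split k) => j; [exact: c1 | exact: c2].
move=> a; rewrite E1 E2 big_split_ord /=; congr (_ + _); apply: eq_bigr => j _;
  rewrite Ek.
  by have -> : split (lshift n2 j) = inl j := unsplitK (inl _ j).
by have -> : split (rshift n1 j) = inr j := unsplitK (inr _ j).
Qed.

Lemma rep_coord n s : (exists N (e : 'I_N -> I) (x : forall k, M (e k)),
       s = \sum_(k < N) iota (e k) (x k)) ->
  Rep (fun a => a n *: s).
Proof.
move=> [N [e [x Es]]]; exists N, e, (fun k a => a n *: x k); split.
  by move=> k; exact: cts_coord.
by move=> a; rewrite Es scaler_sumr; apply: eq_bigr => k _; rewrite linearZ.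
Qed.

Lemma dsum_part : is_direct_sum iota -> U_is_direct_sum iota.
Proof.
move=> [Hgen Hinj]; split.
- move=> h Hh; have [m Em] := cts_expand Hh.
  suff: Rep (fun a => \sum_(n < m) a n *: h (unitv p n)).
    move=> [n [e [hs [c E]]]]; exists n, e, hs; split=> // a; by rewrite Em E.
  elim: m {Em} => [|m IH].
    have -> : (fun a : Acoef p => \sum_(n < 0) a n *: h (unitv p n)) = (fun _ => 0).
      by apply: functional_extensionality => a; rewrite big_ord0.
    exact: rep_zero.
  have -> : (fun a : Acoef p => \sum_(n < m.+1) a n *: h (unitv p n)) =
     (fun a => \sum_(n < m) a n *: h (unitv p n) + a m *: h (unitv p m)).
    by apply: functional_extensionality => a; rewrite big_ord_recr.
  exact: rep_add IH (rep_coord m _ (Hgen _)).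
- move=> n e hs inj _ H k a; exact: (Hinj n e (fun k => hs k a) inj (H a) k).
Qed.
End DS.

Lemma dlim_part (I : Type) (le : I -> I -> Prop) (L : I -> lmodType (Zloc p))
          (phi : forall i j, {linear L i -> L j})
          (C : lmodType (Zloc p)) (psi : forall i, {linear L i -> C}) :
      direct_system le phi -> is_direct_limit le phi psi ->
      U_is_direct_limit le phi psi.
Proof.
move=> [[refl trans [i0] ub] _ comp] [compat surj ker]; split.
- by move=> i j h Hij a; exact: compat.
- move=> h Hh; have [m Em] := cts_expand Hh.
  suff: forall k, exists i (h' : Acoef p -> L i), is_cts_hom h' /\
      forall a, psi i (h' a) = \sum_(n < k) a n *: h (unitv p n).
    move/(_ m) => [i [h' [c e]]]; exists i, h'; split=> // a; by rewrite e Em.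
  elim=> [|k [i [h' [c e]]]].
    exists i0, (fun _ => 0); split; first exact: cts_zero.
    by move=> a; rewrite linear0 big_ord0.
  have [j [x px]] := surj (h (unitv p k)).
  have [l [il jl]] := ub i j.
  exists l, (fun a => phi i l (h' a) + a k *: phi j l x); split.
    exact: cts_add (cts_comp (phi i l) c) (cts_coord _ _).
  by move=> a; rewrite linearD linearZ compat // compat // e px big_ord_recr.
- move=> i h' c H; have [m Em] := cts_expand c.
  suff: forall k, exists j, le i j /\
      forall n, (n < k)%N -> phi i j (h' (unitv p n)) = 0.
    move/(_ m) => [j [ij Hj]]; exists j; split=> // a.
    rewrite Em linear_sum big1 // => n _; by rewrite linearZ_LR (Hj n (ltn_ord n)) scaler0.
  elim=> [|k [j [ij Hj]]].
    by exists i; split.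
  have [j' [ij' Hj']] := ker i (h' (unitv p k)) (H _).
  have [l [jl j'l]] := ub j j'.
  exists l; split; first exact: trans ij jl.
  move=> n; rewrite ltnS leq_eqVlt => /orP [/eqP -> | Hn].
    by rewrite -(comp i j' l) // Hj' linear0.
  by rewrite -(comp i j l) // Hj // linear0.
Qed.

End Parts.

Theorem theorem5p5 (p : nat) (p_prime : prime p) (p_odd : odd p) :
  (forall (L1 L2 L3 : lmodType (Zloc p))
          (f : {linear L1 -> L2}) (g : {linear L2 -> L3}),
      (forall y : L2, g y = 0 <-> exists x : L1, f x = y) ->
      forall h : Acoef p -> L2, is_cts_hom h ->
        ((forall a, g (h a) = 0) <->
         exists h1 : Acoef p -> L1, is_cts_hom h1 /\ forall a, f (h1 a) = h a))
  /\
  (forall (I : Type) (M : I -> lmodType (Zloc p)) (S : lmodType (Zloc p))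
          (iota : forall i, {linear M i -> S}),
      is_direct_sum iota -> U_is_direct_sum iota)
  /\
  (forall (I : Type) (le : I -> I -> Prop) (L : I -> lmodType (Zloc p))
          (phi : forall i j, {linear L i -> L j})
          (C : lmodType (Zloc p)) (psi : forall i, {linear L i -> C}),
      direct_system le phi -> is_direct_limit le phi psi ->
      U_is_direct_limit le phi psi).
Proof.
split; first exact: exact_part.
split; first by move=> *; exact: dsum_part.
by move=> *; exact: dlim_part.
Qed.
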